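(* Let $R$ be a finite local Frobenius ring with maximal ideal $M$, not a field and of odd characteristic, with a fixed primitive additive character $\psi$, and let $\tau$ be a non-primitive multiplicative character of $R$. Then for every $a\in R^\times$, $$\frac{1}{|M^\perp|}\sum_{b\in 1+M^\perp}|K_\tau(ab)|^2=|R|\,(1+\sigma(a)).$$
   Context: All rings are finite and commutative with identity; $R^\times$ is the unit group. $M^\perp=\{r\in R: rm=0\ \forall m\in M\}$. An additive character $(R,+)\to\mathbb{C}^*$ is primitive if the only ideal on which it is identically $1$ is $(0)$; $R$ is Frobenius if such a character exists. A multiplicative character is a homomorphism $R^\times\to\mathbb{C}^*$; its conductor is $R$ if it is trivial, and otherwise the largest ideal $I\subseteq M$ such that it is identically $1$ on $1+I$; it is primitive if its conductor is $(0)$. $K_\tau(a)=\sum_{u\in R^\times}\tau(u)\psi(u+au^{-1})$. Odd characteristic means $R/M$ has odd characteristic; the quadratic character $\sigma:R^\times\to\{\pm1\}$ is $\sigma(u)=$ the quadratic (Legendre) character of the residue class of $u$ in the finite field $R/M$. *)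

(* Defs.v *)
From HB Require Import structures.
From mathcomp Require Import all_boot all_order all_algebra all_field.
Set Implicit Arguments. Unset Strict Implicit. Unset Printing Implicit Defensive.
Import Order.TTheory GRing.Theory Num.Theory.
Local Open Scope ring_scope.

Section Defs.
Variable R : finComUnitRingType.

Definition is_ideal (I : {set R}) : Prop :=
  [/\ 0 \in I, (forall x y, x \in I -> y \in I -> x + y \in I)
    & (forall r x, x \in I -> r * x \in I)].

Definition is_maximal_ideal (M : {set R}) : Prop :=
  [/\ is_ideal M, (1 : R) \notin M &
      forall J : {set R}, is_ideal J -> M \subset J -> J = M \/ J = [set: R]].

Definition local_with_max (M : {set R}) : Prop :=
  is_maximal_ideal M /\ forall J, is_maximal_ideal J -> J = M.

Definition is_field_ring : Prop := forall x : R, x != 0 -> x \is a GRing.unit.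

Definition annih (M : {set R}) : {set R} :=
  [set r | [forall m in M, r * m == 0]].

(* R/M has odd characteristic: its characteristic is an odd prime p,
   i.e. p*1 = 0 in R/M, i.e. p%:R \in M *)
Definition odd_residue_char (M : {set R}) : Prop :=
  exists p : nat, [/\ prime p, odd p & (p%:R : R) \in M].

Definition additive_character (psi : R -> algC) : Prop :=
  (forall x, psi x != 0) /\ (forall x y, psi (x + y) = psi x * psi y).

Definition primitive_additive (psi : R -> algC) : Prop :=
  forall I, is_ideal I -> (forall x, x \in I -> psi x = 1) -> I = [set 0].

(* multiplicative character R^x -> C^*, given as a function on R whose
   values outside R^x are irrelevant *)
Definition mult_character (tau : R -> algC) : Prop :=
  (forall u, u \is a GRing.unit -> tau u != 0) /\
  (forall u v, u \is a GRing.unit -> v \is a GRing.unit ->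
     tau (u * v) = tau u * tau v).

(* conductor is (0): tau nontrivial and every ideal I contained in M on which
   tau is 1 on 1+I is (0) (i.e. the largest such ideal is (0)) *)
Definition primitive_mult (M : {set R}) (tau : R -> algC) : Prop :=
  (exists u, u \is a GRing.unit /\ tau u != 1) /\
  forall I, is_ideal I -> I \subset M ->
    (forall x, x \in I -> tau (1 + x) = 1) -> I = [set 0].

Definition kloost (psi tau : R -> algC) (a : R) : algC :=
  \sum_(u : R | u \is a GRing.unit) tau u * psi (u + a * u^-1).

Definition sigma (M : {set R}) (u : R) : algC :=
  if [exists x : R, u - x ^+ 2 \in M] then 1 else -1.

End Defs.

(* Main.v *)
Require Import Defs.
From HB Require Import structures.
From mathcomp Require Import all_boot all_order all_algebra all_field.
From mathcomp Require Import ring.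
From Stdlib Require Import Classical.
Import Order.TTheory GRing.Theory Num.Theory.
Local Open Scope ring_scope.
Set Implicit Arguments. Unset Strict Implicit. Unset Printing Implicit Defensive.

Section Gen.
Variable R : finComUnitRingType.
Implicit Types I J : {set R}.

Lemma ideal0 I : is_ideal I -> 0 \in I. Proof. by case. Qed.
Lemma idealD I x y : is_ideal I -> x \in I -> y \in I -> x + y \in I.
Proof. by case=> _ H _; apply: H. Qed.
Lemma idealMl I r x : is_ideal I -> x \in I -> r * x \in I.
Proof. by case=> _ _ H; apply: H. Qed.
Lemma idealMr I r x : is_ideal I -> x \in I -> x * r \in I.
Proof. by move=> hI xI; rewrite mulrC; apply: idealMl. Qed.
Lemma idealN I x : is_ideal I -> x \in I -> - x \in I.
Proof. by move=> hI xI; rewrite -mulN1r; apply: idealMl. Qed.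
Lemma idealB I x y : is_ideal I -> x \in I -> y \in I -> x - y \in I.
Proof. by move=> hI xI yI; apply: idealD => //; apply: idealN. Qed.
Lemma idealBr I x y : is_ideal I -> x - y \in I -> y - x \in I.
Proof. by move=> hI h; rewrite -opprB; apply: idealN. Qed.
Lemma ideal_unit I u : is_ideal I -> u \in I -> u \is a GRing.unit -> 1 \in I.
Proof. by move=> hI uI uU; rewrite -(mulVr uU); apply: idealMl. Qed.
Lemma ideal_one I : is_ideal I -> 1 \in I -> I = [set: R].
Proof.
move=> hI oI; apply/setP=> x; rewrite in_setT -[x]mulr1; exact: idealMl.
Qed.

Definition idealb I := [&& (0:R) \in I,
  [forall x, forall y, (x \in I) ==> (y \in I) ==> (x + y \in I)] &
  [forall r, forall x, (x \in I) ==> (r * x \in I)]].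

Lemma idealP I : reflect (is_ideal I) (idealb I).
Proof.
apply: (iffP and3P) => [[h0 /forallP hD /forallP hM]|[h0 hD hM]]; split=> //.
- by move=> x y xI yI; move: (hD x) => /forallP/(_ y); rewrite xI yI.
- by move=> r x xI; move: (hM r) => /forallP/(_ x); rewrite xI.
- by apply/forallP=> x; apply/forallP=> y; apply/implyP=> xI; apply/implyP; apply: hD.
- by apply/forallP=> r; apply/forallP=> x; apply/implyP; apply: hM.
Qed.

Lemma annih_ideal I : is_ideal (annih I).
Proof.
split.
- by rewrite inE; apply/forall_inP=> m _; rewrite mul0r.
- move=> x y; rewrite !inE => /forall_inP hx /forall_inP hy.
  by apply/forall_inP=> m mI; rewrite mulrDl (eqP (hx m mI)) (eqP (hy m mI)) addr0.
- move=> r x; rewrite !inE => /forall_inP hx.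
  by apply/forall_inP=> m mI; rewrite -mulrA (eqP (hx m mI)) mulr0.
Qed.

Lemma annihP I r m : r \in annih I -> m \in I -> r * m = 0.
Proof. by rewrite inE => /forall_inP h mI; apply/eqP/h. Qed.

Lemma annih_sub I J : I \subset J -> annih J \subset annih I.
Proof.
move=> sIJ; apply/subsetP=> r rJ; rewrite inE; apply/forall_inP=> m mI.
by rewrite (annihP rJ) // (subsetP sIJ).
Qed.

Lemma mulset_ideal I t : is_ideal I -> is_ideal [set t * y | y in I].
Proof.
move=> hI; split.
- by apply/imsetP; exists 0; rewrite ?mulr0 // ideal0.
- move=> x y /imsetP[x' x'I ->] /imsetP[y' y'I ->].
  by apply/imsetP; exists (x' + y'); rewrite ?mulrDr // idealD.
- move=> r x /imsetP[x' x'I ->].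
  by apply/imsetP; exists (r * x'); rewrite ?(idealMl _ hI) // mulrCA.
Qed.

Lemma sum_shift (F : R -> algC) (P : pred R) s :
  (forall y, P (y + s) = P y) -> \sum_(y | P y) F y = \sum_(y | P y) F (y + s).
Proof.
move=> hP; rewrite (reindex_inj (addIr s)); apply: eq_bigl => y; exact: hP.
Qed.

Lemma sum_unit_mul (F : R -> algC) w : w \is a GRing.unit ->
  \sum_(u | u \is a GRing.unit) F u = \sum_(u | u \is a GRing.unit) F (u * w).
Proof.
move=> wU; rewrite (reindex_inj (mulIr wU)); apply: eq_bigl => u.
by rewrite unitrMl.
Qed.

Lemma conj_root (z : algC) n : (0 < n)%N -> z ^+ n = 1 -> z^* = z^-1.
Proof.
move=> n0 zn.
have: `|z| ^+ n == 1 by rewrite -normrX zn normr1.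
rewrite pexpr_eq1 // => /eqP z1.
by rewrite invC_norm z1 expr1n invr1 mul1r.
Qed.

Lemma inv_diff (x y : R) : x \is a GRing.unit -> y \is a GRing.unit ->
  x^-1 - y^-1 = x^-1 * y^-1 * (y - x).
Proof.
move=> xU yU; rewrite mulrBr -mulrA mulVr // mulr1 [x^-1 * y^-1]mulrC -mulrA mulVr //.
by rewrite mulr1.
Qed.

End Gen.

Section Main.
Variable R : finComUnitRingType.
Variable M : {set R}.
Variables psi tau : R -> algC.
Hypothesis hloc : local_with_max M.
Hypothesis hnf : ~ is_field_ring R.
Hypothesis hodd : odd_residue_char M.
Hypothesis hpsi : additive_character psi.
Hypothesis hpsiP : primitive_additive psi.
Hypothesis htau : mult_character tau.
Hypothesis htauNP : ~ primitive_mult M tau.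
Implicit Types I J : {set R}.

Lemma idM : is_ideal M. Proof. by case: hloc => -[]. Qed.
Lemma oneM : (1:R) \notin M. Proof. by case: hloc => -[]. Qed.

Lemma unit_notM x : x \is a GRing.unit -> x \notin M.
Proof.
move=> xU; apply/negP=> xM; move: oneM; by rewrite (ideal_unit idM xM xU).
Qed.

Lemma notM_unit x : x \notin M -> x \is a GRing.unit.
Proof.
move=> xM; apply/negPn/negP => xU.
pose S := [set I : {set R} | [&& idealb I, x \in I & (1:R) \notin I]].
pose I0 := [set x * r | r in R].
have hI0 : is_ideal I0.
  have -> : I0 = [set x * r | r in [set: R]] by apply/setP=> y; apply/imsetP/imsetP=> -[r _ ->]; exists r.
  apply: mulset_ideal; split=> // *; exact: in_setT.
have I0S : I0 \in S.
  rewrite inE; apply/and3P; split; first exact/idealP.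
  - by apply/imsetP; exists 1; rewrite ?mulr1.
  - apply/negP=> /imsetP[r _ /esym xr1]; move/negP: xU; apply; apply/unitrPr; by exists r.
have [I IS Imax] := arg_maxnP (fun I : {set R} => #|I|) I0S.
have IS' : I \in S := IS.
move: IS'; rewrite inE => /and3P[/idealP hI xI oI].
have mI : is_maximal_ideal I.
  split=> // J hJ sIJ.
  case: (boolP ((1:R) \in J)) => oJ; first by right; apply: ideal_one.
  left; apply/eqP; rewrite eq_sym eqEcard sIJ /=; apply: Imax.
  change (J \in S).
  by rewrite inE; apply/and3P; split=> //; [exact/idealP|exact: (subsetP sIJ)].
by move: xM; rewrite -(hloc.2 I mI) xI.
Qed.

Lemma memM x : (x \in M) = (x \isn't a GRing.unit).
Proof.
apply/idP/idP => [xM|xU]; first by apply/negP => /unit_notM; rewrite xM.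
by apply/negPn/negP => /notM_unit; rewrite (negbTE xU).
Qed.

Lemma proper_subM I : is_ideal I -> (1:R) \notin I -> I \subset M.
Proof.
move=> hI oI; apply/subsetP=> x xI; rewrite memM; apply/negP=> xU.
by move: oI; rewrite (ideal_unit hI xI xU).
Qed.

Lemma mulM_unit x y : x \is a GRing.unit -> (x * y \in M) = (y \in M).
Proof. by move=> xU; rewrite !memM unitrMr. Qed.

Lemma mulM x y : (x * y \in M) = (x \in M) || (y \in M).
Proof. by rewrite !memM unitrM negb_and. Qed.

Lemma two_notM : (2:R) \notin M.
Proof.
case: hodd => p [pP po pM]; apply/negP=> twoM.
have E : (p%:R : R) = 2 * (p./2)%:R + 1.
  by rewrite -{1}(odd_double_half p) po natrD -muln2 natrM mulrC addrC.
have h2 : 2 * (p./2)%:R \in M by apply: idealMr idM twoM.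
move: (idealB idM pM h2); rewrite E addrC addKr.
by move/negP: oneM.
Qed.

Lemma psiD x y : psi (x + y) = psi x * psi y. Proof. exact: hpsi.2. Qed.
Lemma psi0 : psi 0 = 1.
Proof.
have h := psiD 0 0; rewrite addr0 in h.
have nz := hpsi.1 0.
by apply: (mulfI nz); rewrite mulr1 -h.
Qed.
Lemma psiN x : psi (- x) = (psi x)^-1.
Proof.
have h := psiD x (- x); rewrite subrr psi0 in h.
by apply: (mulfI (hpsi.1 x)); rewrite -h mulfV // hpsi.1.
Qed.
Lemma psiMn x n : psi (x *+ n) = psi x ^+ n.
Proof. by elim: n => [|n IH]; rewrite ?mulr0n ?psi0 ?expr0 // mulrS psiD IH exprS. Qed.

Lemma psi_conj x : (psi x)^* = psi (- x).
Proof.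
have h : x *+ fingroup.order x = 0 := fingroup.expg_order x.
rewrite psiN; apply: (conj_root (fingroup.order_gt0 x)).
by rewrite -psiMn h psi0.
Qed.

Lemma sum_psi_ideal I x : is_ideal I ->
  \sum_(y in I) psi (x * y) = if [forall y in I, x * y == 0] then #|I|%:R else 0.
Proof.
move=> hI; case: ifP => [/forall_inP H | /negbT H].
  rewrite (eq_bigr (fun _ => 1)) => [|y yI]; last by rewrite (eqP (H y yI)) psi0.
  by rewrite sumr_const.
have [y0 y0I py0] : exists2 y0, y0 \in I & psi (x * y0) != 1.
  case: (boolP [exists y in I, psi (x * y) != 1]) => [/exists_inP[y0 ? ?]|/exists_inPn hA].
    by exists y0.
  exfalso; move/negP: H; apply.
  have hxI := mulset_ideal x hI.
  have E := hpsiP hxI.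
  have E2 : [set x * y | y in I] = [set 0].
    apply: E => z /imsetP[y yI ->]; exact/eqP/negPn/hA.
  by apply/forall_inP=> y yI; rewrite -in_set1 -E2; apply: imset_f.
set S := \sum_(y in I) _.
have : S = psi (x * y0) * S.
  rewrite {1}/S (@sum_shift _ _ _ y0) => [|y]; last first.
    apply/idP/idP => h; first by rewrite -(addrK y0 y); apply: idealB.
    by apply: idealD.
  by rewrite /S mulr_sumr; apply: eq_bigr => y _; rewrite mulrDr psiD mulrC.
move/eqP; rewrite -subr_eq0 -{1}[S]mul1r -mulrBl mulf_eq0 subr_eq0 eq_sym (negbTE py0) /=.
by move/eqP.
Qed.

Lemma sum_psi_all y : \sum_x psi (y * x) = if y == 0 then #|R|%:R else 0.
Proof.
have hT : is_ideal [set: R] by split=> *; rewrite in_setT.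
have := sum_psi_ideal y hT.
rewrite (eq_bigl predT) => [->|x]; last by rewrite in_setT.
case: eqP => [->|/eqP y0]; first by rewrite ifT ?cardsT //; apply/forall_inP=> *; rewrite mul0r.
rewrite ifF //; apply/negP=> /forall_inP/(_ 1 (in_setT _)); rewrite mulr1.
by move/eqP; apply/eqP.
Qed.

Lemma card_dual I : is_ideal I -> (#|I| * #|annih I| = #|R|)%N.
Proof.
move=> hI.
have E1 : \sum_x \sum_(y in I) psi (x * y) = (#|annih I| * #|I|)%:R.
  rewrite (eq_bigr (fun x => if x \in annih I then #|I|%:R else 0)) => [|x _]; last first.
    by rewrite sum_psi_ideal // inE.
  by rewrite -big_mkcond sumr_const natrM mulr_natl.
have E2 : \sum_x \sum_(y in I) psi (x * y) = #|R|%:R.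
  rewrite exchange_big /= (bigD1 0) ?(ideal0 hI) //=.
  rewrite [X in _ + X = _]big1 => [|y /andP[_ y0]].
    by rewrite addr0 (eq_bigr (fun x => psi (0 * x))) ?sum_psi_all ?eqxx // => x _; rewrite mulrC.
  by rewrite (eq_bigr (fun x => psi (y * x))) ?sum_psi_all ?(negbTE y0) // => x _; rewrite mulrC.
have : (#|annih I| * #|I|)%:R = #|R|%:R :> algC by rewrite -E1 E2.
by move/eqP; rewrite eqr_nat mulnC => /eqP.
Qed.

Lemma ideal_contains_N I : is_ideal I -> I != [set 0] -> annih M \subset I.
Proof.
move=> hI I0.
have hA := annih_ideal I.
have oA : (1:R) \notin annih I.
  apply/negP=> oA; move/negP: I0; apply; apply/eqP/setP=> y; rewrite in_set1.
  apply/idP/idP => [yI|/eqP->]; last exact: ideal0.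
  by rewrite -[y]mul1r (annihP oA yI).
have sAM := proper_subM hA oA.
have s1 : annih M \subset annih (annih I) := annih_sub sAM.
have s2 : I \subset annih (annih I).
  apply/subsetP=> y yI; rewrite inE; apply/forall_inP=> m mA.
  by rewrite mulrC (annihP mA yI).
have c1 := card_dual hI; have c2 := card_dual hA.
have cA : (0 < #|annih I|)%N by apply/card_gt0P; exists 0; exact: ideal0.
have e : I = annih (annih I).
  apply/eqP; rewrite eqEcard s2 /=.
  have : (#|annih I| * #|annih (annih I)| = #|annih I| * #|I|)%N by rewrite c2 mulnC c1.
  by move/eqP; rewrite eqn_pmul2l // => /eqP ->.
by rewrite e.
Qed.

Notation N := (annih M).

Lemma N_ideal : is_ideal N. Proof. exact: annih_ideal. Qed.

Lemma N_subM : N \subset M.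
Proof.
apply: proper_subM; first exact: N_ideal.
apply/negP=> oN; apply: hnf => x x0; apply: notM_unit; apply/negP=> xM.
by move: x0; rewrite -[x]mul1r (annihP oN xM) eqxx.
Qed.

Lemma N_mul n x : n \in N -> x \in M -> n * x = 0.
Proof. exact: annihP. Qed.

Lemma card_MN : (#|M| * #|N| = #|R|)%N.
Proof. exact: card_dual idM. Qed.

Lemma N_nz : exists2 n, n \in N & n != 0.
Proof.
case: (boolP [exists n in N, n != 0]) => [/exists_inP[n ? ?]|/exists_inPn H]; first by exists n.
exfalso.
have sN : N \subset [set 0] by apply/subsetP=> n nN; rewrite in_set1; apply/negPn/H.
have cN : (#|N| <= 1)%N by rewrite -(cards1 (0:R)) subset_leq_card.
have cM : (#|M| < #|R|)%N.
  rewrite -cardsT; apply: proper_card; rewrite properT; apply/negP=> /eqP MT.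
  by move: oneM; rewrite MT in_setT.
move: cM; rewrite -card_MN; case: #|N| cN => [|[|]] // _.
  by rewrite muln0.
by rewrite muln1 ltnn.
Qed.

Lemma sumN c : \sum_(m in N) psi (c * m) = if c \in M then #|N|%:R else 0.
Proof.
rewrite sum_psi_ideal; last exact: N_ideal.
case: (boolP (c \in M)) => cM.
  by rewrite ifT //; apply/forall_inP=> m mN; rewrite mulrC N_mul.
rewrite ifF //; apply/negP=> /forall_inP H.
have cU := notM_unit cM.
have [n nN n0] := N_nz; move/negP: n0; apply.
by rewrite -(mulKr cU n) (eqP (H n nN)) mulr0.
Qed.

Lemma tauM u v : u \is a GRing.unit -> v \is a GRing.unit -> tau (u * v) = tau u * tau v.
Proof. exact: htau.2. Qed.
Lemma tau1 : tau 1 = 1.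
Proof.
have h := tauM (@unitr1 R) (@unitr1 R); rewrite mulr1 in h.
have nz := htau.1 1 (@unitr1 R).
by apply: (mulfI nz); rewrite mulr1 -h.
Qed.
Lemma tauX u n : u \is a GRing.unit -> tau (u ^+ n) = tau u ^+ n.
Proof.
move=> uU; elim: n => [|n IH]; first by rewrite !expr0 tau1.
by rewrite !exprS tauM ?IH // unitrX.
Qed.
Lemma tau_conj u : u \is a GRing.unit -> (tau u)^* = (tau u)^-1.
Proof.
move=> uU.
pose w : {unit R} := @FinRing.Unit R u uU.
have h := fingroup.expg_order w.
have h2 : u ^+ fingroup.order w = 1.
  by have := congr1 val h; rewrite FinRing.val_unitX.
apply: (conj_root (fingroup.order_gt0 w)).
by rewrite -tauX // h2 tau1.
Qed.
Lemma tauV u : u \is a GRing.unit -> tau u^-1 = (tau u)^-1.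
Proof.
move=> uU; have uV : u^-1 \is a GRing.unit by rewrite unitrV.
have h := tauM uU uV; rewrite mulrV // tau1 in h.
have nz := htau.1 u uU.
by apply: (mulfI nz); rewrite -h mulfV.
Qed.

Lemma unit1N n : n \in M -> 1 + n \is a GRing.unit.
Proof.
move=> nM; apply: notM_unit; apply/negP=> h.
have : (1 + n) - n \in M by apply: idealB idM h nM.
by rewrite addrK => h1; move: oneM; rewrite h1.
Qed.

Lemma tauN1 n : n \in N -> tau (1 + n) = 1.
Proof.
move=> nN.
have nM : n \in M := subsetP N_subM n nN.
case: (classic (exists u, u \is a GRing.unit /\ tau u != 1)) => [hA|hA]; last first.
  by apply/eqP/negPn/negP => h; apply: hA; exists (1 + n); split=> //; exact: unit1N.
have : ~ (forall I, is_ideal I -> I \subset M ->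
    (forall x, x \in I -> tau (1 + x) = 1) -> I = [set 0]).
  by move=> hB; apply: htauNP; split.
move=> hB.
case: (classic (exists I, [/\ is_ideal I, I \subset M,
   (forall x, x \in I -> tau (1 + x) = 1) & I != [set 0]])) => [[I [hI sIM hIt I0]]|hC].
  exact/hIt/(subsetP (ideal_contains_N hI I0)).
exfalso; apply: hB => I hI sIM hIt.
by apply/eqP/negPn/negP => I0; apply: hC; exists I; split.
Qed.

Variable a : R.
Hypothesis ha : a \is a GRing.unit.

Definition g (u : R) := u + a * u^-1.
Definition G (d : R) := \sum_(u | u - d \in M) tau u * psi (g u).
Definition phi (t v : R) := t * (v - a * (v * (1 + t))^-1).

Lemma cong_unit d v : d \is a GRing.unit -> v - d \in M -> v \is a GRing.unit.
Proof.
move=> dU vd; apply: notM_unit; apply/negP=> vM.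
have : v - (v - d) \in M by apply: idealB idM vM vd.
by rewrite opprB addrC subrK => dM; move: (unit_notM dU); rewrite dM.
Qed.

Lemma sum_cong (F : R -> algC) d :
  \sum_(v | v - d \in M) F v = \sum_(t in M) F (t + d).
Proof.
rewrite (reindex_inj (addIr d)); apply: eq_bigl => t; by rewrite addrK.
Qed.

Lemma card_cong d : \sum_(v | v - d \in M) (1 : algC) = #|M|%:R.
Proof. by rewrite sum_cong sumr_const. Qed.

Lemma N_inv d u m : d \is a GRing.unit -> u - d \in M -> m \in N ->
  m * u^-1 = m * d^-1.
Proof.
move=> dU ud mN; have uU := cong_unit dU ud.
apply/eqP; rewrite -subr_eq0 -mulrBr inv_diff //.
rewrite N_mul ?eqxx //; apply: idealMl idM _; apply: idealBr idM ud.
Qed.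

Lemma sq_cong d v : a - d ^+ 2 \in M -> v - d \in M -> v * v - a \in M.
Proof.
move=> ad vd.
have -> : v * v - a = (v - d) * (v + d) + (d ^+ 2 - a) by ring.
apply: idealD idM _ _; first exact: idealMr idM vd.
exact: idealBr idM ad.
Qed.

Lemma phi_pair d v t : d \is a GRing.unit -> v - d \in M -> t \in M ->
  (tau v * psi (g v))^* * (tau (v * (1 + t)) * psi (g (v * (1 + t))))
  = tau (1 + t) * psi (phi t v).
Proof.
move=> dU vd tM; have vU := cong_unit dU vd; have tU := unit1N tM.
have wU : v * (1 + t) \is a GRing.unit by rewrite unitrM vU tU.
rewrite rmorphM /= tau_conj // psi_conj tauM //.
have -> : (tau v)^-1 * psi (- g v) * (tau v * tau (1 + t) * psi (g (v * (1 + t))))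
  = ((tau v)^-1 * tau v) * tau (1 + t) * (psi (- g v) * psi (g (v * (1 + t)))) by ring.
rewrite mulVf ?htau.1 // mul1r -psiD; congr (_ * psi _).
rewrite /g /phi.
have e : v^-1 = (v * (1 + t))^-1 + t * (v * (1 + t))^-1.
  have := inv_diff wU vU.
  have -> : v - v * (1 + t) = - (v * t) by ring.
  move=> h; apply/eqP; rewrite -subr_eq0; apply/eqP.
  have -> : v^-1 - ((v * (1 + t))^-1 + t * (v * (1 + t))^-1) =
     - ((v * (1 + t))^-1 - v^-1) - t * (v * (1 + t))^-1 by ring.
  rewrite h.
  have -> : (v * (1 + t))^-1 * v^-1 * - (v * t) = - ((v^-1 * v) * (t * (v * (1 + t))^-1)) by ring.
  by rewrite mulVr // mul1r opprK subrr.
rewrite e; set X := (v * (1 + t))^-1; ring.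
Qed.

Lemma Hsum d t : d \is a GRing.unit -> a - d ^+ 2 \in M -> t \in M ->
  \sum_(v | v - d \in M) psi (phi t v) = if t \in N then #|M|%:R else 0.
Proof.
move=> dU ad tM; have tU := unit1N tM.
case: (boolP (t \in N)) => tN.
  rewrite -(card_cong d); apply: eq_bigr => v vd.
  have vU := cong_unit dU vd.
  have wU : v * (1 + t) \is a GRing.unit by rewrite unitrM vU tU.
  rewrite /phi N_mul ?psi0 //.
  rewrite -(mulM_unit _ wU) mulrBr mulrCA mulrV // mulr1.
  have -> : v * (1 + t) * v - a = (v * v - a) + (v * v) * t by ring.
  apply: idealD idM (sq_cong ad vd) _; exact: idealMl idM tM.
pose I := [set x | t * x \in N].
have Imem x : (x \in I) = (t * x \in N) := in_set (fun x => t * x \in N) x.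
have hI : is_ideal I.
  split.
  - by rewrite Imem mulr0 (ideal0 N_ideal).
  - by move=> x y; rewrite !Imem mulrDr => hx hy; apply: idealD N_ideal hx hy.
  - by move=> r x; rewrite !Imem mulrCA => hx; apply: idealMl N_ideal hx.
have sIM : I \subset M by apply: proper_subM hI _; rewrite Imem mulr1.
have [s0 s0I ts0] : exists2 s0, s0 \in I & t * s0 != 0.
  have hT : is_ideal [set t * x | x in [set: R]].
    by apply: mulset_ideal; split=> *; rewrite in_setT.
  have T0 : [set t * x | x in [set: R]] != [set 0].
    apply/negP=> /eqP E.
    have : t * 1 \in [set t * x | x in [set: R]] by apply: imset_f; rewrite in_setT.
    rewrite E in_set1 mulr1 => /eqP t0; move: tN; rewrite t0 ideal0 //; exact: N_ideal.
  have [n nN n0] := N_nz.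
  have /imsetP[x _ nx] := subsetP (ideal_contains_N hT T0) n nN.
  by exists x; rewrite ?Imem -nx.
set S := \sum_(v | v - d \in M) _.
have key : forall v s, v - d \in M -> s \in I ->
  phi t (v + s) = phi t v + (t * (1 + a * (1 + t)^-1 * v^-1 * v^-1)) * s.
  move=> v s vd sI.
  have sM := subsetP sIM s sI.
  have vU := cong_unit dU vd.
  have vsU : v + s \is a GRing.unit by apply: (cong_unit dU); rewrite addrAC; apply: idealD idM vd sM.
  rewrite /phi !invrM //; set e := (1 + t)^-1; set X := (v + s)^-1; set Y := v^-1.
  have F1 : X - Y = X * Y * (v - (v + s)) by rewrite inv_diff.
  have F2 : t * s * X = t * s * Y.
    have tsN : t * s \in N by rewrite -Imem.
    apply/eqP; rewrite -subr_eq0 -mulrBr (N_mul tsN) ?eqxx //.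
    rewrite F1; apply: idealMl idM _; rewrite opprD addNKr; exact: idealN idM sM.
  apply/eqP; rewrite -subr_eq0.
  have -> : t * (v + s - a * (e * X)) - (t * (v - a * (e * Y)) + t * (1 + a * e * Y * Y) * s)
     = a * e * Y * (t * s * X - t * s * Y) - t * a * e * ((X - Y) - X * Y * (v - (v + s))) by ring.
  by rewrite F2 F1 !subrr !mulr0 subrr.
have Sz : S * #|I|%:R = 0.
  rewrite -sumr_const mulr_sumr.
  rewrite (eq_bigr (fun s => \sum_(v | v - d \in M) psi (phi t (v + s)))) => [|s sI]; last first.
    have sM := subsetP sIM s sI.
    rewrite mulr1 /S (@sum_shift _ _ _ s) // => y; apply/idP/idP => h.
      by rewrite -(addrK s y) addrAC; apply: idealB idM h sM.
    by rewrite addrAC; apply: idealD idM h sM.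
  rewrite exchange_big /= big1 // => v vd.
  rewrite (eq_bigr (fun s => psi (phi t v) * psi (t * (1 + a * (1 + t)^-1 * v^-1 * v^-1) * s))) => [|s sI]; last by rewrite key // psiD.
  rewrite -mulr_sumr sum_psi_ideal // ifF ?mulr0 //.
  apply/negP=> /forall_inP/(_ s0 s0I) /eqP.
  set w := 1 + _.
  have vU := cong_unit dU vd.
  have wU : w \is a GRing.unit.
    apply: notM_unit; apply/negP=> wM.
    have hw : w - 2 \in M.
      rewrite -(mulM_unit _ (_ : v * v * (1 + t) \is a GRing.unit)); last by rewrite !unitrM vU tU.
      have -> : v * v * (1 + t) * (w - 2) = a * ((1 + t) * (1 + t)^-1) * ((v * v^-1) * (v * v^-1)) - v * v * (1 + t).
        by rewrite /w; ring.
      rewrite !mulrV // !mulr1.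
      have -> : a - v * v * (1 + t) = - (v * v - a) - v * v * t by ring.
      apply: idealB idM _ _; first exact: idealN idM (sq_cong ad vd).
      exact: idealMl idM tM.
    have : w - (w - 2) \in M by apply: idealB idM wM hw.
    by rewrite opprB addrC subrK => h2; move: two_notM; rewrite h2.
  rewrite mulrAC => h; move/eqP: ts0; apply; by rewrite -(mulrK wU (t * s0)) h mul0r.
have I0 : #|I|%:R != 0 :> algC by rewrite pnatr_eq0 -lt0n; apply/card_gt0P; exists s0.
by move/eqP: Sz; rewrite mulf_eq0 (negbTE I0) orbF => /eqP.
Qed.

Lemma GG d : d \is a GRing.unit -> a - d ^+ 2 \in M -> G d * (G d)^* = #|R|%:R.
Proof.
move=> dU ad.
rewrite mulrC /G rmorph_sum /= mulr_suml.
rewrite (eq_bigr (fun v => \sum_(t in M) tau (1 + t) * psi (phi t v))) => [|v vd]; last first.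
  have vU := cong_unit dU vd.
  rewrite mulr_sumr (reindex (fun t => v * (1 + t))) /=; last first.
    apply: onW_bij; exists (fun u => u * v^-1 - 1) => x.
      by rewrite mulrC mulKr // addrAC subrr add0r.
    by rewrite addrC subrK mulrCA mulrV // mulr1.
  have hP t : (v * (1 + t) - d \in M) = (t \in M).
    have -> : v * (1 + t) - d = (v - d) + v * t by ring.
    apply/idP/idP => [h|tM]; last by apply: idealD idM vd _; apply: idealMl idM tM.
    rewrite -(mulM_unit _ vU); have -> : v * t = (v - d + v * t) - (v - d) by ring.
    exact: idealB idM h vd.
  apply: eq_big => [t|t]; first exact: hP.
  rewrite hP => tM; exact: (phi_pair dU vd tM).
rewrite exchange_big /=.
rewrite (eq_bigr (fun t => if t \in N then #|M|%:R else 0)) => [|t tM]; last first.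
  rewrite -mulr_sumr Hsum //; case: ifP => tN; [by rewrite tauN1 // mul1r | by rewrite mulr0].
rewrite -big_mkcondr /=.
rewrite (eq_bigl (fun t => t \in N)) => [|t]; last first.
  by apply/andP/idP => [[]//|tN]; split=> //; exact: (subsetP N_subM).
by rewrite sumr_const -mulrnA card_MN.
Qed.

Lemma inv1N n : n \in N -> (1 + n)^-1 = 1 - n.
Proof.
move=> nN; have nM := subsetP N_subM n nN.
apply: (mulrI (unit1N nM)); rewrite mulrV ?unit1N //.
have -> : (1 + n) * (1 - n) = 1 - n * n by ring.
by rewrite N_mul // subr0.
Qed.

Lemma K_restrict m : m \in N ->
  kloost psi tau (a * (1 + m)) =
  \sum_(u | (u \is a GRing.unit) && (u * u - a \in M)) tau u * psi (u + a * (1 + m) * u^-1).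
Proof.
move=> mN; have mM := subsetP N_subM m mN.
set F := fun u => tau u * psi (u + a * (1 + m) * u^-1).
have E n : n \in N -> kloost psi tau (a * (1 + m)) =
    \sum_(u | u \is a GRing.unit) F u * psi ((u - a * u^-1) * n).
  move=> nN; have nM := subsetP N_subM n nN.
  rewrite /kloost (sum_unit_mul _ (unit1N nM)); apply: eq_bigr => u uU.
  rewrite /F tauM ?unit1N // tauN1 // mulr1 -[RHS]mulrA -psiD; congr (_ * psi _).
  rewrite invrM ?unit1N // inv1N //.
  have -> : u * (1 + n) + a * (1 + m) * ((1 - n) * u^-1) =
     u + a * (1 + m) * u^-1 + (u - a * u^-1) * n - a * u^-1 * (m * n) by ring.
  by rewrite (N_mul mN nM) mulr0 subr0.
have cN : #|N|%:R != 0 :> algC.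
  by rewrite pnatr_eq0 -lt0n; apply/card_gt0P; exists 0; exact: (ideal0 N_ideal).
apply: (mulfI cN).
have -> : #|N|%:R * kloost psi tau (a * (1 + m)) = \sum_(n in N) kloost psi tau (a * (1 + m)).
  by rewrite sumr_const mulr_natl.
rewrite (eq_bigr _ E) exchange_big /=.
rewrite [X in _ = _ * X]big_mkcondr mulr_sumr; apply: eq_bigr => u uU.
rewrite -mulr_sumr (eq_bigr (fun n => psi ((u - a * u^-1) * n))) // sumN.
have -> : (u - a * u^-1 \in M) = (u * u - a \in M).
  by rewrite -(mulM_unit _ uU) mulrBr mulrCA mulrV // mulr1.
by case: ifP => _; rewrite ?mulr0 // mulrC.
Qed.

Lemma K_nonsq m : m \in N -> ~~ [exists x : R, a - x ^+ 2 \in M] ->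
  kloost psi tau (a * (1 + m)) = 0.
Proof.
move=> mN /existsPn H; rewrite K_restrict // big1 // => u /andP[_ h].
by move: (H u); rewrite expr2 (idealBr idM h).
Qed.

Lemma phase_shift d u m : d \is a GRing.unit -> u - d \in M -> m \in N ->
  u + a * (1 + m) * u^-1 = g u + (a * d^-1) * m.
Proof.
move=> dU ud mN.
have -> : u + a * (1 + m) * u^-1 = u + a * u^-1 + a * (m * u^-1) by ring.
by rewrite (N_inv dU ud mN) /g; ring.
Qed.

Lemma K_sq m c : m \in N -> a - c ^+ 2 \in M ->
  kloost psi tau (a * (1 + m)) =
  psi ((a * c^-1) * m) * G c + psi ((- (a * c^-1)) * m) * G (- c).
Proof.
move=> mN ac.
have cU : c \is a GRing.unit.
  apply: notM_unit; apply/negP=> cM.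
  have : (a - c ^+ 2) + c ^+ 2 \in M by apply: idealD idM ac _; rewrite expr2; apply: idealMl idM cM.
  by rewrite subrK => aM; move: (unit_notM ha); rewrite aM.
have ncU : - c \is a GRing.unit by rewrite unitrN.
rewrite K_restrict // (bigID (fun u => u - c \in M)) /=.
congr (_ + _).
  rewrite /G mulr_sumr; apply: eq_big => [u|u].
    apply/andP/idP => [[] //|h]; split=> //; rewrite ?(cong_unit cU h) //.
    exact: sq_cong ac h.
  move=> /andP[/andP[uU _] h].
  rewrite (phase_shift cU h mN) psiD; ring.
have hP u : [&& u \is a GRing.unit, u * u - a \in M & u - c \notin M] = (u - - c \in M).
  apply/and3P/idP => [[uU h1 h2]|h].
    have : (u - c) * (u - - c) \in M.
      have -> : (u - c) * (u - - c) = (u * u - a) + (a - c ^+ 2) by ring.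
      exact: idealD idM h1 ac.
    by rewrite mulM (negbTE h2).
  have uU := cong_unit ncU h.
  split=> //; last first.
    apply/negP=> h2.
    have : (u - - c) - (u - c) \in M by apply: idealB idM h h2.
    have -> : u - - c - (u - c) = 2 * c by ring.
    by rewrite mulM (negbTE two_notM) (negbTE (unit_notM cU)).
  by apply: sq_cong _ h; rewrite sqrrN.
rewrite /G mulr_sumr; apply: eq_big => [u|u]; first by rewrite -andbA hP.
rewrite -andbA hP => h.
rewrite (phase_shift ncU h mN) psiD invrN mulrN; ring.
Qed.

Lemma sum2 (G1 G2 : algC) e : e \is a GRing.unit ->
  \sum_(m in N) `|psi (e * m) * G1 + psi ((- e) * m) * G2| ^+ 2
  = #|N|%:R * (G1 * G1^* + G2 * G2^*).
Proof.
move=> eU.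
have e2 : e + e \notin M.
  rewrite -mulr2n -mulr_natl mulM negb_or two_notM /=; exact: unit_notM.
have e2' : - e + - e \notin M by rewrite -opprD memM unitrN -memM.
rewrite (eq_bigr (fun m => (G1 * G1^* + G2 * G2^*) + psi ((e + e) * m) * (G1 * G2^*)
    + psi ((- e + - e) * m) * (G2 * G1^*))) => [|m _]; last first.
  rewrite normCK rmorphD !rmorphM /= !psi_conj !mulrDl !mulNr opprK !psiD.
  set x := psi (e * m); set y := psi (- (e * m)).
  have xy : x * y = 1 by rewrite /x /y -psiD subrr psi0.
  apply/eqP; rewrite -subr_eq0; apply/eqP.
  transitivity ((x * y - 1) * (G1 * G1^* + G2 * G2^*)); first by ring.
  by rewrite xy subrr mul0r.
rewrite !big_split /= !sumr_const -!mulr_suml !sumN (negbTE e2) (negbTE e2').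
by rewrite !mul0r !addr0 -mulrnDl mulr_natl.
Qed.

Lemma sq_unit c : a - c ^+ 2 \in M -> c \is a GRing.unit.
Proof.
move=> ac; apply: notM_unit; apply/negP=> cM.
have : (a - c ^+ 2) + c ^+ 2 \in M by apply: idealD idM ac _; rewrite expr2; apply: idealMl idM cM.
by rewrite subrK => aM; move: (unit_notM ha); rewrite aM.
Qed.

Theorem main_sec :
  (#|annih M|%:R)^-1 *
    \sum_(b in [set 1 + m | m in annih M]) `|kloost psi tau (a * b)| ^+ 2
  = #|R|%:R * (1 + sigma M a).
Proof.
have cN : #|N|%:R != 0 :> algC.
  by rewrite pnatr_eq0 -lt0n; apply/card_gt0P; exists 0; exact: (ideal0 N_ideal).
rewrite big_imset /=; last by move=> x y _ _; apply: addrI.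
rewrite /sigma; case: ifP => [/existsP[c ac]|/negbT H].
  have cU := sq_unit ac.
  rewrite (eq_bigr (fun m => `|psi ((a * c^-1) * m) * G c + psi ((- (a * c^-1)) * m) * G (- c)| ^+ 2)) => [|m mN]; last by rewrite (K_sq mN ac).
  rewrite sum2 ?unitrM ?ha ?unitrV // !GG ?unitrN ?sqrrN //.
  by rewrite mulKf //; ring.
rewrite big1 => [|m mN]; last by rewrite K_nonsq // normr0 expr0n.
by rewrite mulr0 subrr mulr0.
Qed.
End Main.

Theorem mainTheorem9 (R : finComUnitRingType) (M : {set R})
  (psi tau : R -> algC)
  (hloc : local_with_max M)
  (hnf : ~ is_field_ring R)
  (hodd : odd_residue_char M)
  (hpsi : additive_character psi) (hpsiP : primitive_additive psi)
  (htau : mult_character tau) (htauNP : ~ primitive_mult M tau)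
  (a : R) (ha : a \is a GRing.unit) :
  (#|annih M|%:R)^-1 *
    \sum_(b in [set 1 + m | m in annih M]) `|kloost psi tau (a * b)| ^+ 2
  = #|R|%:R * (1 + sigma M a).
Proof.
exact: (main_sec hloc hnf hodd hpsi hpsiP htau htauNP ha).
Qed.
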